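(* Let $\tau$ be an arithmetic signature and let $Q \subseteq \mathrm{STRUC}[\tau]$ be a $\tau$-problem. For each first-order $\tau$-formula $\phi$ (i.e. $\phi \in \mathrm{FO}[+,\times]$) that describes $Q$ eventually, there are quantifier-free $\tau$-formulas $\alpha$ and $\beta$ such that $(\alpha \land \phi) \lor \beta$ describes $Q$.
   Context: Signatures are finite and contain relation symbols and constant symbols, and possibly the special unary function symbol $\mathrm{succ}$; all structures are finite. A signature $\tau$ is arithmetic if it contains the binary relation $<$, the ternary relations $\mathrm{add}$ and $\mathrm{mult}$, the unary function symbol $\mathrm{succ}$ and the constant symbol $0$; in that case $\mathrm{STRUC}[\tau]$ denotes the class of finite $\tau$-structures in which $<$ is a linear order of the universe and $\mathrm{add}$, $\mathrm{mult}$, $\mathrm{succ}$, $0$ have their natural meaning with respect to this order (identifying the universe with $\{0,\dots,n-1\}$ via the order; $0$ is the minimum and the successor of the maximum element is itself). $\mathrm{FO}[+,\times]$ denotes first-order formulas over arithmetic signatures. A $\tau$-problem is a set $Q \subseteq \mathrm{STRUC}[\tau]$ closed under isomorphism. A $\tau$-sentence $\phi$ describes $Q$ if $Q = \{\mathcal A \in \mathrm{STRUC}[\tau] \mid \mathcal A \models \phi\}$, and it describes $Q$ eventually if there is a number $m$ such that for all $\mathcal A \in \mathrm{STRUC}[\tau]$ whose universe has at least $m$ elements we have $\mathcal A \models \phi$ iff $\mathcal A \in Q$. *)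

(* Defs.v *)
From mathcomp Require Import all_boot.
Set Implicit Arguments. Unset Strict Implicit. Unset Printing Implicit Defensive.

(* All signatures considered here contain the
   unary function symbol succ (every arithmetic signature does), so succ is
   built into terms and structures. *)
Record sig := Sig { Rel : finType; ar : Rel -> nat; Con : finType }.

Record asig := ASig {
  asig_sig :> sig;
  s_lt : Rel asig_sig;
  s_add : Rel asig_sig;
  s_mult : Rel asig_sig;
  s_zero : Con asig_sig;
  ar_lt : ar s_lt = 2;
  ar_add : ar s_add = 3;
  ar_mult : ar s_mult = 3;
  add_neq_mult : s_add <> s_mult }.

Record struc (s : sig) (A : finType) := Struc {
  srel : forall r : Rel s, {ffun 'I_(ar r) -> A} -> bool;
  scon : Con s -> A;
  ssucc : A -> A }.

Definition tupl (A : finType) (x : A) (l : seq A) (k : nat) : {ffun 'I_k -> A} :=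
  [ffun i : 'I_k => nth x l i].

(* M belongs to STRUC[tau]: < is a linear order of the universe and, via the
   identification of the universe with {0,..,n-1} along <, add, mult, succ, 0
   have their natural meaning (succ of the maximum is itself). *)
Definition is_arith (s : asig) (A : finType) (M : struc s A) : Prop :=
  exists f : A -> nat,
    injective f /\ (forall x, f x < #|A|) /\
    (forall x y, srel M (tupl x [:: x; y] (ar (s_lt s))) <-> f x < f y) /\
    (forall x y z, srel M (tupl x [:: x; y; z] (ar (s_add s))) <-> f x + f y = f z) /\
    (forall x y z, srel M (tupl x [:: x; y; z] (ar (s_mult s))) <-> f x * f y = f z) /\
    (forall x, f (ssucc M x) = if f x + 1 < #|A| then f x + 1 else f x) /\
    f (scon M (s_zero s)) = 0.

Definition is_iso (s : sig) (A B : finType) (M : struc s A) (N : struc s B)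
  (h : A -> B) : Prop :=
  bijective h /\
  (forall r (t : {ffun 'I_(ar r) -> A}), srel M t = srel N [ffun i => h (t i)]) /\
  (forall c, h (scon M c) = scon N c) /\
  (forall x, h (ssucc M x) = ssucc N (h x)).

Definition problem (s : asig) (Q : forall A : finType, struc s A -> Prop) : Prop :=
  (forall A (M : struc s A), Q A M -> is_arith M) /\
  (forall A B (M : struc s A) (N : struc s B) h, is_iso M N h -> Q A M -> Q B N).

Inductive term (s : sig) : Type :=
  | TVar of nat
  | TCon of Con s
  | TSucc of term s.

Inductive formula (s : sig) : Type :=
  | FRel (r : Rel s) of ('I_(ar r) -> term s)
  | FEq of term s & term s
  | FNot of formula s
  | FAnd of formula s & formula s
  | FOr of formula s & formula s
  | FEx of nat & formula s
  | FAll of nat & formula s.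

Fixpoint teval (s : sig) (A : finType) (M : struc s A) (e : nat -> A) (t : term s) : A :=
  match t with
  | TVar v => e v
  | TCon c => scon M c
  | TSucc t' => ssucc M (teval M e t')
  end.

Definition upd (A : Type) (e : nat -> A) (v : nat) (a : A) : nat -> A :=
  fun w => if w == v then a else e w.

Fixpoint sat (s : sig) (A : finType) (M : struc s A) (e : nat -> A) (f : formula s) : Prop :=
  match f with
  | FRel r ts => srel M [ffun i => teval M e (ts i)]
  | FEq t1 t2 => teval M e t1 = teval M e t2
  | FNot g => ~ sat M e g
  | FAnd g h => sat M e g /\ sat M e h
  | FOr g h => sat M e g \/ sat M e h
  | FEx v g => exists a : A, sat M (upd e v a) g
  | FAll v g => forall a : A, sat M (upd e v a) g
  end.

Fixpoint tfv (s : sig) (t : term s) : seq nat :=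
  match t with
  | TVar v => [:: v]
  | TCon _ => [::]
  | TSucc t' => tfv t'
  end.

Fixpoint fv (s : sig) (f : formula s) : seq nat :=
  match f with
  | FRel r ts => flatten [seq tfv (ts i) | i <- enum 'I_(ar r)]
  | FEq t1 t2 => tfv t1 ++ tfv t2
  | FNot g => fv g
  | FAnd g h | FOr g h => fv g ++ fv h
  | FEx v g | FAll v g => [seq w <- fv g | w != v]
  end.

Definition sentence (s : sig) (f : formula s) : Prop := fv f = [::].

Fixpoint qfree (s : sig) (f : formula s) : bool :=
  match f with
  | FRel _ _ | FEq _ _ => true
  | FNot g => qfree g
  | FAnd g h | FOr g h => qfree g && qfree h
  | FEx _ _ | FAll _ _ => false
  end.

(* truth of a sentence in a structure (environment irrelevant for sentences) *)
Definition models (s : sig) (A : finType) (M : struc s A) (f : formula s) : Prop :=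
  forall e : nat -> A, sat M e f.

Definition describes (s : asig) (Q : forall A : finType, struc s A -> Prop)
  (f : formula s) : Prop :=
  sentence f /\
  forall (A : finType) (M : struc s A), is_arith M -> (models M f <-> Q A M).

Definition describes_eventually (s : asig) (Q : forall A : finType, struc s A -> Prop)
  (f : formula s) : Prop :=
  sentence f /\
  exists m : nat, forall (A : finType) (M : struc s A),
    is_arith M -> m <= #|A| -> (models M f <-> Q A M).

(* Main.v *)
Require Import Defs.
From mathcomp Require Import all_boot.
From mathcomp Require Import zify.
From Stdlib Require Import Classical.
Set Implicit Arguments. Unset Strict Implicit. Unset Printing Implicit Defensive.

Definition TT {s : asig} : formula s := FEq (TCon (s_zero s)) (TCon (s_zero s)).
Definition FF {s : asig} : formula s := FNot TT.
Definition num {s : asig} (k : nat) : term s := iter k (@TSucc s) (TCon (s_zero s)).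
Definition val {s : asig} (A : finType) (M : struc s A) (k : nat) : A :=
  iter k (ssucc M) (scon M (s_zero s)).
Definition lesz {s : asig} (k : nat) : formula s := FEq (num k) (num k.+1).
Definition sizeeq {s : asig} (n : nat) : formula s :=
  match n with 0 => FF | 1 => lesz 0 | k.+2 => FAnd (lesz k.+1) (FNot (lesz k)) end.

Definition Idx (s : asig) (n : nat) : finType :=
  ({r : Rel s & {ffun 'I_(ar r) -> 'I_n}} + (Con s * 'I_n))%type.

Definition atomf {s : asig} {n : nat} (x : Idx s n) : formula s :=
  match x with
  | inl (existT r g) => @FRel s r (fun j => num (g j))
  | inr (c, k) => FEq (TCon c) (num k)
  end.

Definition atom_b {s : asig} {n : nat} (A : finType) (M : struc s A) (x : Idx s n) : bool :=
  match x with
  | inl (existT r g) => srel M [ffun j => val M (g j)]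
  | inr (c, k) => scon M c == val M k
  end.

Definition lit {s : asig} (b : bool) (a : formula s) := if b then a else FNot a.

Definition bigand {s : asig} (I : Type) (l : seq I) (F : I -> formula s) :=
  foldr (fun i acc => FAnd (F i) acc) TT l.
Definition bigor {s : asig} (I : Type) (l : seq I) (F : I -> formula s) :=
  foldr (fun i acc => FOr (F i) acc) FF l.

Definition diag {s : asig} {n : nat} (bs : {ffun Idx s n -> bool}) : formula s :=
  FAnd (sizeeq n) (bigand (enum (Idx s n)) (fun i => lit (bs i) (atomf i))).

Lemma teval_num (s : asig) (A : finType) (M : struc s A) e k :
  teval M e (num k) = val M k.
Proof. elim: k => [|k IH] //=. by rewrite -/(num k) IH. Qed.

Lemma tfv_num (s : asig) k : tfv (@num s k) = [::].
Proof. elim: k => [|k IH] //=. Qed.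

Lemma fval (s : asig) (A : finType) (M : struc s A) f :
  (forall x, f x < #|A|) ->
  (forall x, f (ssucc M x) = if f x + 1 < #|A| then f x + 1 else f x) ->
  f (scon M (s_zero s)) = 0 ->
  forall k, f (val M k) = minn k #|A|.-1.
Proof.
move=> hlt hs h0 k. have := hlt (scon M (s_zero s)) => hpos.
elim: k => [|k IH]; first by rewrite /val /= h0; lia.
rewrite /val iterS -/(val M k) hs IH. case: ifP; lia.
Qed.

Lemma sat_bigand (s : asig) (A : finType) (M : struc s A) e (I : eqType) (l : seq I) F :
  sat M e (bigand l F) <-> (forall i, i \in l -> sat M e (F i)).
Proof.
elim: l => [|a l IH] /=; first by split.
rewrite IH; split.
- move=> [h1 h2] i; rewrite in_cons => /orP [/eqP -> //|]; exact: h2.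
- move=> h; split; first by apply: h; rewrite in_cons eqxx.
  move=> i hi; apply: h; by rewrite in_cons hi orbT.
Qed.

Lemma sat_bigor (s : asig) (A : finType) (M : struc s A) e (I : eqType) (l : seq I) F :
  sat M e (bigor l F) <-> (exists i, i \in l /\ sat M e (F i)).
Proof.
elim: l => [|a l IH] /=.
- split; first by move=> h; exfalso; apply: h.
  by move=> [i []].
rewrite IH; split.
- move=> [h|[i [hi h]]]; first by exists a; rewrite in_cons eqxx.
  by exists i; rewrite in_cons hi orbT.
- move=> [i []]; rewrite in_cons => /orP [/eqP -> h|hi h]; first by left.
  by right; exists i.
Qed.

Lemma fv_flat_nil (s : sig) (I : Type) (l : seq I) (ts : I -> term s) :
  (forall j, tfv (ts j) = [::]) -> flatten [seq tfv (ts j) | j <- l] = [::].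
Proof. move=> h; elim: l => [|a l IH] //=. by rewrite h IH. Qed.

Lemma fv_bigand (s : asig) (I : Type) (l : seq I) (F : I -> formula s) :
  (forall i, fv (F i) = [::] /\ qfree (F i)) -> fv (bigand l F) = [::] /\ qfree (bigand l F).
Proof.
move=> h; elim: l => [|a l [IH1 IH2]] //=.
have [h1 h2] := h a. by rewrite h1 IH1 h2 IH2.
Qed.

Lemma fv_bigor (s : asig) (I : Type) (l : seq I) (F : I -> formula s) :
  (forall i, fv (F i) = [::] /\ qfree (F i)) -> fv (bigor l F) = [::] /\ qfree (bigor l F).
Proof.
move=> h; elim: l => [|a l IH1] //=.
have [h1 h2] := h a. case: IH1 => IH1 IH2. by rewrite h1 IH1 h2 IH2.
Qed.

Lemma fv_lesz (s : asig) k : fv (@lesz s k) = [::] /\ qfree (@lesz s k).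
Proof. by rewrite /= !tfv_num. Qed.

Lemma fv_sizeeq (s : asig) n : fv (@sizeeq s n) = [::] /\ qfree (@sizeeq s n).
Proof. case: n => [|[|k]] //=; by rewrite !tfv_num. Qed.

Lemma fv_diag (s : asig) n (bs : {ffun Idx s n -> bool}) : fv (diag bs) = [::] /\ qfree (diag bs).
Proof.
rewrite /diag /=. have [h1 h2] := fv_sizeeq s n.
have H : forall i, fv (lit (bs i) (atomf i)) = [::] /\ qfree (lit (bs i) (atomf i)).
  move=> [[r g]|[c k]]; case: (bs _) => /=; rewrite ?tfv_num //;
    rewrite fv_flat_nil // => j; exact: tfv_num.
have [h3 h4] := @fv_bigand s _ (enum (Idx s n)) _ H.
by rewrite h1 h2 h3 h4.
Qed.

Ltac clia A := let N := fresh "N" in set N := #|A|; clearbody N; lia.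

Section Arith.
Context (s : asig) (A : finType) (M : struc s A) (f : A -> nat)
  (finj : injective f) (hlt : forall x, f x < #|A|)
  (hs : forall x, f (ssucc M x) = if f x + 1 < #|A| then f x + 1 else f x)
  (h0 : f (scon M (s_zero s)) = 0).

Lemma fv' k : f (val M k) = minn k #|A|.-1.
Proof. exact: fval. Qed.

Lemma cardpos : 0 < #|A|.
Proof. have := hlt (scon M (s_zero s)); lia. Qed.

Lemma valK x : val M (f x) = x.
Proof. apply: finj. rewrite fv'. have := hlt x; lia. Qed.

Lemma sat_lesz e k : sat M e (lesz k) <-> #|A| <= k.+1.
Proof.
rewrite /= !teval_num. change (ssucc M (val M k)) with (val M k.+1). split.
- move=> h; have := congr1 f h; rewrite !fv'. have := cardpos. clear. set N := #|A|. lia.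
- move=> h; apply: finj; rewrite !fv'. move: h. clear. set N := #|A|. lia.
Qed.

Lemma sat_sizeeq e n : sat M e (sizeeq n) <-> #|A| = n.
Proof.
have hp := cardpos.
case: n => [|[|k]].
- rewrite /=; split; [by move=> h; exfalso; apply: h|move: hp; clia A].
- change (sat M e (lesz 0) <-> #|A| = 1). rewrite sat_lesz; move: hp; clia A.
- change (sat M e (lesz k.+1) /\ ~ sat M e (lesz k) <-> #|A| = k.+2).
  rewrite !sat_lesz; move: hp; clear; set N := #|A|; clearbody N.
  split; [case; lia | move=> h; split; lia].
Qed.

Lemma sat_atom e n (i : Idx s n) : sat M e (atomf i) <-> atom_b M i.
Proof.
case: i => [[r g]|[c k]] /=.
- have -> : [ffun j => teval M e (num (g j))] = [ffun j => val M (g j)].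
    by apply/ffunP => j; rewrite !ffunE teval_num.
  by [].
- rewrite teval_num; split; [by move=> ->|by move/eqP].
Qed.

Lemma sat_diag e n (bs : {ffun Idx s n -> bool}) :
  sat M e (diag bs) <-> #|A| = n /\ forall i, atom_b M i = bs i.
Proof.
rewrite /diag /= sat_sizeeq sat_bigand. split.
- move=> [h1 h2]; split => // i. have := h2 i (mem_enum _ i).
  rewrite /lit; case: (bs i); rewrite ?sat_atom //=.
  by rewrite sat_atom; case: (atom_b M i) => // H; exfalso; apply: H.
- move=> [h1 h2]; split => // i _. rewrite /lit -(h2 i).
  case E: (atom_b M i) => /=; rewrite sat_atom ?E //.
Qed.

End Arith.

Lemma iso_of (s : asig) (A B : finType) (M : struc s A) (N : struc s B) :
  is_arith M -> is_arith N -> forall n, #|A| = n -> #|B| = n ->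
  (forall i : Idx s n, atom_b M i = atom_b N i) ->
  exists h, is_iso M N h.
Proof.
move=> [fM [iM [lM [_ [_ [_ [sM zM]]]]]]] [fN [iN [lN [_ [_ [_ [sN zN]]]]]]] n hA hB hag.
have ltM : forall x, fM x < n by move=> x; rewrite -hA.
have ltN : forall x, fN x < n by move=> x; rewrite -hB.
have fvM := fv' lM sM zM. have fvN := fv' lN sN zN.
have vKM := valK iM lM sM zM. have vKN := valK iN lN sN zN.
exists (fun x => val N (fM x)).
split; [|split; [|split]].
- exists (fun y => val M (fN y)) => x.
  + rewrite fvN hB. have -> : minn (fM x) n.-1 = fM x by have := ltM x; clear; lia.
    exact: vKM.
  + rewrite fvM hA. have -> : minn (fN x) n.-1 = fN x by have := ltN x; clear; lia.
    exact: vKN.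
- move=> r t.
  have := hag (inl (existT _ r [ffun j => Ordinal (ltM (t j))])) => /=.
  have -> : [ffun j => val M ([ffun j0 => Ordinal (ltM (t j0))] j)] = t.
    by apply/ffunP => j; rewrite !ffunE /= vKM.
  move=> ->. congr (srel N _). by apply/ffunP => j; rewrite !ffunE.
- move=> c. have := hag (inr (c, Ordinal (ltM (scon M c)))) => /=.
  by rewrite vKM eqxx => /esym /eqP <-.
- move=> x. apply: iN. change (ssucc N (val N (fM x))) with (val N (fM x).+1).
  rewrite !fvN sM hA hB. have := ltM x; clear; case: ifP; lia.
Qed.

Lemma filter_ex (T : eqType) (l : seq T) (P : T -> Prop) :
  exists l' : seq T, forall x, x \in l' <-> x \in l /\ P x.
Proof.
elim: l => [|a l [l' IH]]; first by exists [::] => x; split => //; case.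
case: (classic (P a)) => Pa.
- exists (a :: l') => x; rewrite !in_cons; split.
  + case/orP => [/eqP ->|/IH [h1 h2]]; first by rewrite eqxx.
    by rewrite h1 orbT.
  + case=> /orP [/eqP ->|h1] h2; first by rewrite eqxx.
    by apply/orP; right; apply/IH.
- exists l' => x; rewrite in_cons IH; split.
  + by case=> h1 h2; rewrite h1 orbT.
  + case=> /orP [/eqP ->|h1] h2 //.
Qed.

Lemma gamma_ex (s : asig) (Q : forall A : finType, struc s A -> Prop)
  (HQ : problem Q) (n : nat) :
  exists g : formula s, fv g = [::] /\ qfree g /\
    forall (A : finType) (M : struc s A) e, is_arith M ->
      (sat M e g <-> #|A| = n /\ Q A M).
Proof.
have [l' Hl'] := filter_ex (enum {ffun Idx s n -> bool})
  (fun bs => exists (B : finType) (N : struc s B) e, is_arith N /\ Q B N /\ sat N e (diag bs)).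
exists (bigor l' diag).
have [h1 h2] := fv_bigor l' (@fv_diag s n).
split => //; split => // A M e HM.
rewrite sat_bigor.
have HM' := HM. case: HM' => [fM [iM [lM [_ [_ [_ [sM zM]]]]]]].
split.
- move=> [bs [/Hl' [_ [B [N [e' [HN [QN SN]]]]]] SM]].
  have HN' := HN. case: HN' => [fN [iN [lN [_ [_ [_ [sN zN]]]]]]].
  move/(sat_diag iM lM sM zM): SM => [cA aM].
  move/(sat_diag iN lN sN zN): SN => [cB aN].
  split => //.
  have [h hiso] : exists h, is_iso N M h.
    apply: (iso_of HN HM cB cA) => i. by rewrite aN aM.
  exact: (HQ.2 _ _ _ _ _ hiso QN).
- move=> [cA QM].
  pose bs : {ffun Idx s n -> bool} := [ffun i => atom_b M i].
  have SM : sat M e (diag bs).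
    apply/(sat_diag iM lM sM zM); split => // i. by rewrite ffunE.
  exists bs; split => //. apply/Hl'; split; first by rewrite mem_enum.
  by exists A, M, e.
Qed.

Lemma beta_ex (s : asig) (Q : forall A : finType, struc s A -> Prop)
  (HQ : problem Q) (k : nat) :
  exists b : formula s, fv b = [::] /\ qfree b /\
    forall (A : finType) (M : struc s A) e, is_arith M ->
      (sat M e b <-> #|A| < k /\ Q A M).
Proof.
elim: k => [|k [b [h1 [h2 h3]]]].
- exists FF; split => //; split => // A M e HM /=.
  split; [by move=> h; exfalso; apply: h| by case].
- have [g [g1 [g2 g3]]] := gamma_ex HQ k.
  exists (FOr b g); rewrite /= h1 g1 h2 g2; split => //; split => // A M e HM.
  rewrite /= h3 // g3 //. move: (#|A|) => N. split.
  + case=> [[h q]|[h q]]; split => //; lia.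
  + case=> h q. have [hl|he] : N < k \/ N = k by lia.
    * by left. * by right.
Qed.

Theorem lemma2p1 (s : asig) (Q : forall A : finType, struc s A -> Prop)
  (HQ : problem Q) (phi : formula s) :
  describes_eventually Q phi ->
  exists alpha beta : formula s,
    qfree alpha /\ qfree beta /\
    describes Q (FOr (FAnd alpha phi) beta).
Proof.
move=> [Hphi [m0 Hm]].
have [b [b1 [b2 b3]]] := beta_ex HQ m0.+2.
exists (FNot (lesz m0)), b; split => //; split => //; split.
- by rewrite /sentence /= !tfv_num Hphi b1.
move=> A M HM.
have HM' := HM. case: HM' => [fM [iM [lM [_ [_ [_ [sM zM]]]]]]].
have hp := cardpos lM.
have Ha : forall e, sat M e (FNot (lesz m0)) <-> m0.+2 <= #|A|.
  move=> e. change (~ sat M e (lesz m0) <-> m0.+2 <= #|A|).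
  rewrite (sat_lesz iM lM sM zM). move: hp; clia A.
case: (leqP m0.+2 #|A|) => hA.
- rewrite -(Hm A M HM); last by move: hA; clia A.
  split => h e.
  + case: (h e) => [[_ //]|]. move/b3 => /(_ HM) [hh _]. by move: hA hh; clia A.
  + left; split; last exact: h. by apply/Ha.
- split.
  + move=> h. have := h (fun _ => scon M (s_zero s)). case.
    * case=> /Ha hh _. by move: hA hh; clia A.
    * by move/b3 => /(_ HM) [].
  + move=> q e. right. by apply/b3.
Qed.
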